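(* There exist regular (up to a charged thin shell) spherically symmetric, asymptotically flat, non-time-symmetric and non-maximal initial data satisfying the dominant energy condition, with a ball $\mathcal{B}$ of area radius $\mathcal{R}$ outside which the data are electrovacuum with charge $Q$ and mass $M>|Q|$, having a horizon outside $\mathcal{B}$ of area radius $r_+=M+\sqrt{M^2-Q^2}$, and such that $2\mathcal{R}<|Q|$. In particular, inequality $2\mathcal{R}>|Q|$ can fail for a ball lying inside a horizon.
   Context: Spherically symmetric data: metric $dl^2+r(l)^2(d\theta^2+\sin^2\theta d\phi^2)$, second fundamental form $K_{ij}=n_in_jK_l+(h_{ij}-n_in_j)K_r$, $n=\partial_l$, trace $K=K_l+2K_r$ (maximal means $K=0$; time-symmetric means $K_{ij}=0$). Null expansions $\theta^\pm=\frac2r(r'\pm K_rr)$; a horizon is the outer boundary of a trapped region ($\theta^+\theta^-<0$) and satisfies $\theta^+\theta^-=0$. Asymptotic flatness: $h_{ij}=\delta_{ij}+O(r^{-1})$, $K_{ij}=O(r^{-2})$ with the corresponding derivative falloffs. Electrovacuum: only matter is the electric field $E=Q/r^2$. *)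

(* Defs.v *)
From Stdlib Require Import Reals Lra.
Open Scope R_scope.

Fixpoint CnOn (n : nat) (D : R -> Prop) (f : R -> R) : Prop :=
  match n with
  | O => forall x, D x -> continuity_pt f x
  | S n' => exists f', (forall x, D x -> derivable_pt_lim f x (f' x)) /\ CnOn n' D f'
  end.

Definition smooth_on (D : R -> Prop) (f : R -> R) : Prop := forall n, CnOn n D f.

Definition deriv_on (D : R -> Prop) (f f' : R -> R) : Prop :=
  forall x, D x -> derivable_pt_lim f x (f' x).

(* A smooth piece of spherically symmetric data, parametrized by the     *)
(* arclength l:   metric dl^2 + r(l)^2 dOmega^2,                          *)
(*   K_ij = n_i n_j Kl + (h_ij - n_i n_j) Kr,  radial electric field E.   *)
(* r1, r2, r3 are the l-derivatives of r; Kl1, Kr1 those of Kl, Kr.     *)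
Record SSPiece := mkSSPiece {
  r : R -> R; r1 : R -> R; r2 : R -> R; r3 : R -> R;
  Kl : R -> R; Kl1 : R -> R;
  Kr : R -> R; Kr1 : R -> R;
  Ef : R -> R
}.

Definition piece_ok (D : R -> Prop) (p : SSPiece) : Prop :=
  smooth_on D (r p) /\ smooth_on D (Kl p) /\ smooth_on D (Kr p) /\ smooth_on D (Ef p) /\
  deriv_on D (r p) (r1 p) /\ deriv_on D (r1 p) (r2 p) /\ deriv_on D (r2 p) (r3 p) /\
  deriv_on D (Kl p) (Kl1 p) /\ deriv_on D (Kr p) (Kr1 p).

(* Regularity at the centre l = 0: the data extend to (-a,a) with r, E odd,
   r'(0) = 1, Kl, Kr even and Kl(0) = Kr(0); for smooth functions this is
   exactly smoothness of h_ij, K_ij, E_i at the origin of R^3. *)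
Definition center_regular (a : R) (p : SSPiece) : Prop :=
  (forall x, -a < x < a -> r p (- x) = - r p x) /\
  r1 p 0 = 1 /\
  (forall x, -a < x < a -> Kl p (- x) = Kl p x) /\
  (forall x, -a < x < a -> Kr p (- x) = Kr p x) /\
  Kl p 0 = Kr p 0 /\
  (forall x, -a < x < a -> Ef p (- x) = - Ef p x).

(* Constraint equations:
   16 pi mu = R(h) + K^2 - |K|^2,   8 pi J_i = D^j K_ij - D_i K,
   with R(h) = (2/r^2)(1 - r'^2) - 4 r''/r. *)
Definition mu (p : SSPiece) (l : R) : R :=
  ((2 / (r p l)^2) * (1 - (r1 p l)^2) - 4 * r2 p l / r p l
   + 4 * Kl p l * Kr p l + 2 * (Kr p l)^2) / (16 * PI).

Definition Jrad (p : SSPiece) (l : R) : R :=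
  ((2 * r1 p l / r p l) * (Kl p l - Kr p l) - 2 * Kr1 p l) / (8 * PI).

(* energy density of the non-electromagnetic matter *)
Definition mu_matter (p : SSPiece) (l : R) : R := mu p l - (Ef p l)^2 / (8 * PI).

(* dominant energy condition (for the non-electromagnetic matter; the
   electric field carries no momentum density since B = 0) *)
Definition dec_bulk (p : SSPiece) (l : R) : Prop := Rabs (Jrad p l) <= mu_matter p l.

(* Thin shell at l = ls between inner piece pI and outer piece pO:
   surface energy density sigma = -[r']/(4 pi r), surface momentum
   j = -[Kr]/(4 pi)  (delta parts of the constraints). *)
Definition shell_sigma (pI pO : SSPiece) (ls : R) : R :=
  - (r1 pO ls - r1 pI ls) / (4 * PI * r pO ls).
Definition shell_j (pI pO : SSPiece) (ls : R) : R :=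
  - (Kr pO ls - Kr pI ls) / (4 * PI).
Definition dec_shell (pI pO : SSPiece) (ls : R) : Prop :=
  Rabs (shell_j pI pO ls) <= shell_sigma pI pO ls.

Definition theta_plus (p : SSPiece) (l : R) : R := 2 / r p l * (r1 p l + Kr p l * r p l).
Definition theta_minus (p : SSPiece) (l : R) : R := 2 / r p l * (r1 p l - Kr p l * r p l).
Definition thth (p : SSPiece) (l : R) : R := theta_plus p l * theta_minus p l.

(* lh is the outer boundary of a trapped region (theta+ theta- < 0) and
   theta+ theta- = 0 there. *)
(* lo: left end of the region where the piece p describes the data. *)
Definition horizon_at (p : SSPiece) (lo lh : R) : Prop :=
  thth p lh = 0 /\
  exists eps, 0 < eps /\ lo < lh - eps /\
    forall l, lh - eps < l < lh -> thth p l < 0.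

(* Asymptotic flatness, in the areal chart |x| = r (valid for l > l1 where
   r' > 0): h_ij - delta_ij = a(r) n_i n_j with a = 1/r'^2 - 1 and
   K_ij = b n_i n_j + Kr (delta_ij - n_i n_j) with b = Kl/r'^2;
   we require a = O_2(1/r), b, Kr = O_1(1/r^2), d/dr = (1/r') d/dl. *)
Definition asymp_flat (p : SSPiece) : Prop :=
  (forall N, exists L, forall l, L < l -> N < r p l) /\
  exists l1 C, forall l, l1 < l ->
    let rr := r p l in let v := r1 p l in let w := r2 p l in let z := r3 p l in
    0 < v /\
    Rabs (1 / v^2 - 1) <= C / rr /\
    Rabs (-2 * w / v^4) <= C / rr^2 /\
    Rabs ((-2 * z / v^4 + 8 * w^2 / v^5) / v) <= C / rr^3 /\
    Rabs (Kl p l / v^2) <= C / rr^2 /\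
    Rabs ((Kl1 p l / v^2 - 2 * Kl p l * w / v^3) / v) <= C / rr^3 /\
    Rabs (Kr p l) <= C / rr^2 /\
    Rabs (Kr1 p l / v) <= C / rr^3.

(* ADM mass: the ADM flux (1/16pi) \oint (d_j h_ij - d_i h_jj) dS^i in the
   areal chart equals (r/2)(1/r'^2 - 1); the mass is its limit. *)
Definition adm_mass (p : SSPiece) (M : R) : Prop :=
  forall eps, 0 < eps -> exists L, forall l, L < l ->
    Rabs (r p l / 2 * (1 / (r1 p l)^2 - 1) - M) < eps.

(* Main.v *)
Require Import Defs.
From Stdlib Require Import Reals Lra ClassicalEpsilon FunctionalExtensionality Ranalysis5.
From Coquelicot Require Import Coquelicot.
Open Scope R_scope.

Lemma CnOn_weak : forall n D f, CnOn (S n) D f -> CnOn n D f.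
Proof.
  induction n as [|n IH]; intros D f H.
  - destruct H as [f' [Hd _]]. intros x Hx.
    apply derivable_continuous_pt. exists (f' x). apply Hd; exact Hx.
  - destruct H as [f' [Hd Hc]]. exists f'. split; [exact Hd|]. apply IH; exact Hc.
Qed.

Lemma CnOn_const : forall n D c, CnOn n D (fun _ => c).
Proof.
  induction n as [|n IH]; intros D c.
  - intros x _. apply continuity_pt_const. intros a b; reflexivity.
  - exists (fun _ => 0). split; [|apply IH].
    intros x _. apply derivable_pt_lim_const.
Qed.

Lemma CnOn_plus : forall n D f g, CnOn n D f -> CnOn n D g -> CnOn n D (fun x => f x + g x).
Proof.
  induction n as [|n IH]; intros D f g Hf Hg.
  - intros x Hx. exact (continuity_pt_plus f g x (Hf x Hx) (Hg x Hx)).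
  - destruct Hf as [f' [Hdf Hcf]]. destruct Hg as [g' [Hdg Hcg]].
    exists (fun x => f' x + g' x). split.
    + intros x Hx. exact (derivable_pt_lim_plus f g x _ _ (Hdf x Hx) (Hdg x Hx)).
    + apply IH; assumption.
Qed.

Lemma CnOn_mult : forall n D f g, CnOn n D f -> CnOn n D g -> CnOn n D (fun x => f x * g x).
Proof.
  induction n as [|n IH]; intros D f g Hf Hg.
  - intros x Hx. exact (continuity_pt_mult f g x (Hf x Hx) (Hg x Hx)).
  - pose proof (CnOn_weak _ _ _ Hf) as Hf0. pose proof (CnOn_weak _ _ _ Hg) as Hg0.
    destruct Hf as [f' [Hdf Hcf]]. destruct Hg as [g' [Hdg Hcg]].
    exists (fun x => f' x * g x + f x * g' x). split.
    + intros x Hx. exact (derivable_pt_lim_mult f g x _ _ (Hdf x Hx) (Hdg x Hx)).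
    + apply CnOn_plus; apply IH; assumption.
Qed.

Inductive pexpr := PV | PC (c : R) | PA (a b : pexpr) | PM (a b : pexpr).
Fixpoint peval (e : pexpr) (s : R) : R :=
  match e with PV => s | PC c => c | PA a b => peval a s + peval b s | PM a b => peval a s * peval b s end.

Lemma CnOn_pexpr : forall n D f e, CnOn n D f -> CnOn n D (fun x => peval e (f x)).
Proof.
  intros n D f e Hf. induction e; simpl.
  - exact Hf.
  - apply CnOn_const.
  - apply CnOn_plus; assumption.
  - apply CnOn_mult; assumption.
Qed.

Lemma CnOn_ext : forall n D f g, (forall x, f x = g x) -> CnOn n D f -> CnOn n D g.
Proof. intros. replace g with f; [assumption|]. apply functional_extensionality; assumption. Qed.

Lemma CnOn_id : forall n D, CnOn n D (fun x => x).
Proof.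
  induction n as [|n IH]; intros D.
  - intros x _. apply derivable_continuous_pt. apply derivable_pt_id.
  - exists (fun _ => 1). split; [|apply CnOn_const]. intros x _. apply derivable_pt_lim_id.
Qed.


Definition pp (t : R) := 2*t^2 - 14*t + 25.
Lemma pp_pos : forall t, 0 < pp t.
Proof. intros t. unfold pp. pose proof (pow2_ge_0 (t - 7/2)). nra. Qed.

Definition Lf (t : R) := t + 7/2 * (ln (2*t^2 - 14*t + 25) - ln 5) + 24 * (atan (2*t - 7) - atan (-3)).
Definition Lf' (t : R) := 2*t^2 / (2*t^2 - 14*t + 25).

Lemma Lf_deriv : forall t, derivable_pt_lim Lf t (Lf' t).
Proof.
  intros t. apply is_derive_Reals. unfold Lf, Lf'.
  pose proof (pp_pos t) as H. unfold pp in H.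
  auto_derive.
  - nra.
  - field. split; nra.
Qed.

Definition dLf : derivable Lf := fun x => exist _ (Lf' x) (Lf_deriv x).

Lemma Lf_MVT : forall a b, a < b -> exists c, Lf b - Lf a = Lf' c * (b - a) /\ a < c < b.
Proof. intros a b H. destruct (MVT_cor1 Lf a b dLf H) as [c [H1 H2]]. exists c. split; assumption. Qed.

Lemma Lf2 : Lf 2 = 2.
Proof.
  unfold Lf. replace (2*2^2 - 14*2 + 25) with 5 by ring. replace (2*2-7) with (-3) by ring. ring.
Qed.

Lemma Lf_mono : forall x y, 1 <= x -> x < y -> Lf x < Lf y.
Proof.
  intros x y Hx Hxy. destruct (Lf_MVT x y Hxy) as [c [H1 H2]].
  assert (0 < Lf' c).
  { unfold Lf'. pose proof (pp_pos c). unfold pp in H. apply Rdiv_lt_0_compat; nra. }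
  nra.
Qed.

Lemma Lf_mono_le : forall x y, 1 <= x -> x <= y -> Lf x <= Lf y.
Proof. intros x y Hx Hxy. destruct (Req_dec x y). subst; lra. left; apply Lf_mono; lra. Qed.

Lemma Lf_ge : forall y, 2 <= y -> y <= Lf y.
Proof.
  intros y Hy. destruct (Req_dec y 2). subst. rewrite Lf2; lra.
  destruct (Lf_MVT 2 y) as [c [H1 H2]]; [lra|].
  assert (1 <= Lf' c).
  { unfold Lf'. pose proof (pp_pos c). unfold pp in H0.
    apply Rmult_le_reg_r with (2*c^2 - 14*c + 25); [lra|].
    unfold Rdiv. rewrite Rmult_assoc, Rinv_l by lra. nra. }
  rewrite Lf2 in H1. nra.
Qed.

Lemma Lf_b : 0 < Lf (3/2) < 2.
Proof.
  split.
  - destruct (Lf_MVT (3/2) 2) as [c [H1 H2]]; [lra|]. rewrite Lf2 in H1.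
    assert (Lf' c <= 8/5).
    { unfold Lf'. pose proof (pp_pos c). unfold pp in H.
      apply Rmult_le_reg_r with (2*c^2 - 14*c + 25); [lra|].
      unfold Rdiv. rewrite Rmult_assoc, Rinv_l by lra.
      assert (0 <= (2-c)*(50/3-c)) by (apply Rmult_le_pos; lra). nra. }
    nra.
  - pose proof (Lf_mono (3/2) 2 ltac:(lra) ltac:(lra)) as H. rewrite Lf2 in H. lra.
Qed.

Lemma Lf_cont : continuity Lf.
Proof. apply derivable_continuous. exact dLf. Qed.

Lemma Lf_surj : forall l, Lf 1 <= l -> exists y, 1 <= y /\ Lf y = l.
Proof.
  intros l Hl. destruct (Req_dec l (Lf 1)) as [E|E]. exists 1; split; [lra|auto].
  set (Y := Rmax l 2 + 1).
  assert (HY : l < Lf Y).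
  { assert (2 <= Y) by (unfold Y; pose proof (Rmax_r l 2); lra).
    pose proof (Lf_ge Y H). pose proof (Rmax_l l 2). unfold Y in *; lra. }
  assert (1 < Y) by (unfold Y; pose proof (Rmax_r l 2); lra).
  destruct (IVT (fun t => Lf t - l) 1 Y) as [z [Hz1 Hz2]].
  - apply continuity_minus. apply Lf_cont. apply continuity_const. intros a b; reflexivity.
  - assumption.
  - lra.
  - lra.
  - exists z. split; lra.
Qed.

Definition rO (l : R) : R := epsilon (inhabits 0) (fun y => 1 <= y /\ Lf y = l).

Lemma rO_spec : forall l, Lf 1 <= l -> 1 <= rO l /\ Lf (rO l) = l.
Proof.
  intros l Hl. unfold rO. apply (epsilon_spec (inhabits 0) (fun y => 1 <= y /\ Lf y = l)).
  apply Lf_surj; assumption.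
Qed.

Lemma Lf_inj : forall x y, 1 <= x -> 1 <= y -> Lf x = Lf y -> x = y.
Proof.
  intros x y Hx Hy E. destruct (Rtotal_order x y) as [H|[H|H]]; auto.
  pose proof (Lf_mono x y Hx H); lra. pose proof (Lf_mono y x Hy H); lra.
Qed.

Lemma rO_Lf : forall y, 1 <= y -> rO (Lf y) = y.
Proof.
  intros y Hy. destruct (rO_spec (Lf y)) as [H1 H2]. apply Lf_mono_le; lra.
  apply Lf_inj; auto.
Qed.

Lemma rO_gt : forall l y, 1 <= y -> Lf y < l -> y < rO l.
Proof.
  intros l y Hy H. assert (Lf 1 <= l) by (pose proof (Lf_mono_le 1 y); lra).
  destruct (rO_spec l H0) as [H1 H2].
  destruct (Rlt_or_le y (rO l)); auto.
  pose proof (Lf_mono_le (rO l) y H1 H3). lra.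
Qed.

Lemma rO_lt : forall l y, 1 <= y -> Lf 1 <= l -> l < Lf y -> rO l < y.
Proof.
  intros l y Hy Hl H. destruct (rO_spec l Hl) as [H1 H2].
  destruct (Rlt_or_le (rO l) y); auto.
  pose proof (Lf_mono_le y (rO l) Hy H0). lra.
Qed.

Lemma rO_deriv : forall l, Lf (3/2) < l -> derivable_pt_lim rO l (1 / Lf' (rO l)).
Proof.
  intros l Hl.
  assert (H1 : Lf 1 <= Lf (3/2)) by (apply Lf_mono_le; lra).
  set (Y := Rmax l 2 + 1).
  assert (HY2 : 2 <= Y) by (unfold Y; pose proof (Rmax_r l 2); lra).
  assert (HY : l < Lf Y).
  { pose proof (Lf_ge Y HY2). pose proof (Rmax_l l 2). unfold Y in *; lra. }
  assert (Hcont : continuity_pt rO l).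
  { apply (continuity_pt_recip_interv Lf rO (3/2) Y); try lra.
    - intros x y Hx Hxy _. apply Lf_mono; lra.
    - intros x Hx _. unfold comp, id. apply rO_spec. lra.
    - intros x Hx1 Hx2. split.
      + destruct (Req_dec x (Lf (3/2))). subst. rewrite rO_Lf; lra.
        left. apply rO_gt; lra.
      + destruct (Req_dec x (Lf Y)). subst. rewrite rO_Lf; lra.
        left. apply rO_lt; lra.
    - intros a _. apply Lf_cont. }
  assert (Hinc : rO (Lf (3/2)) <= rO l <= rO (Lf Y)).
  { rewrite !rO_Lf by lra. split; left; [apply rO_gt|apply rO_lt]; lra. }
  assert (Hne : Lf' (rO l) <> 0).
  { destruct (rO_spec l) as [A _]; [lra|]. unfold Lf'. pose proof (pp_pos (rO l)). unfold pp in H.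
    apply Rgt_not_eq. apply Rdiv_lt_0_compat; nra. }
  exact (derivable_pt_lim_recip_interv Lf rO (Lf (3/2)) (Lf Y) l (fun a _ => dLf a) Hcont
     ltac:(lra) ltac:(lra) Hinc
     (fun x Hx => proj2 (rO_spec x ltac:(lra))) Hne).
Qed.


Definition G (s : R) := 1 - 7*s + 25/2*s^2.
Definition Phi (s : R) := - s^2 * G s.
Definition sig (l : R) := / rO l.
Definition DO := fun x => Lf (3/2) < x.

Lemma rO_ge1 : forall l, Lf (3/2) < l -> 1 <= rO l.
Proof. intros l H. apply rO_spec. pose proof (Lf_mono_le 1 (3/2)). lra. Qed.

Lemma rO_deriv' : forall l, Lf (3/2) < l -> derivable_pt_lim rO l (G (sig l)).
Proof.
  intros l H. pose proof (rO_deriv l H) as Hd. pose proof (rO_ge1 l H) as H1.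
  replace (G (sig l)) with (1 / Lf' (rO l)); [exact Hd|].
  unfold G, sig, Lf'. pose proof (pp_pos (rO l)). unfold pp in H0. field. split; lra.
Qed.

Lemma sig_deriv : forall l, Lf (3/2) < l -> derivable_pt_lim sig l (Phi (sig l)).
Proof.
  intros l H. pose proof (rO_deriv' l H) as Hd. pose proof (rO_ge1 l H) as H1.
  apply is_derive_Reals in Hd. apply is_derive_Reals.
  unfold sig. eapply is_derive_ext. intros; reflexivity.
  replace (Phi (/ rO l)) with (- G (sig l) / rO l ^ 2).
  apply is_derive_inv; [exact Hd|lra].
  unfold Phi, G, sig. field. lra.
Qed.

Lemma sig_smooth : forall n, CnOn n DO sig.
Proof.
  induction n as [|n IH].
  - intros x Hx. apply derivable_continuous_pt. exists (Phi (sig x)). apply sig_deriv; exact Hx.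
  - exists (fun x => Phi (sig x)). split.
    + intros x Hx. apply sig_deriv; exact Hx.
    + apply CnOn_ext with (fun x => peval (PM (PM (PC (-1)) (PM PV PV))
          (PA (PA (PC 1) (PM (PC (-7)) PV)) (PM (PC (25/2)) (PM PV PV)))) (sig x)).
      intros x; simpl; unfold Phi, G; field.
      apply CnOn_pexpr; exact IH.
Qed.

Lemma rO_smooth : forall n, CnOn n DO rO.
Proof.
  intros [|n].
  - intros x Hx. apply derivable_continuous_pt. exists (G (sig x)). apply rO_deriv'; exact Hx.
  - exists (fun x => G (sig x)). split.
    + intros x Hx. apply rO_deriv'; exact Hx.
    + apply CnOn_ext with (fun x => peval (PA (PA (PC 1) (PM (PC (-7)) PV)) (PM (PC (25/2)) (PM PV PV))) (sig x)).
      intros x; simpl; unfold G; field.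
      apply CnOn_pexpr; apply sig_smooth.
Qed.

Lemma comp_sig : forall (P P' : R -> R) l V, (forall s : R, is_derive P s (P' s)) -> Lf (3/2) < l ->
  P' (sig l) * Phi (sig l) = V -> derivable_pt_lim (fun x => P (sig x)) l V.
Proof.
  intros P P' l V HP Hl E. rewrite <- E.
  apply (derivable_pt_lim_comp sig P l (Phi (sig l)) (P' (sig l))).
  apply sig_deriv; exact Hl. apply is_derive_Reals; apply HP.
Qed.

Definition R2f s := (7*s^2 - 25*s^3) * G s.
Definition R3f s := ((-14*s^3 + 75*s^4) * G s + (7*s^2 - 25*s^3)^2) * G s.
Definition KLf s := -7*s^2 + 25*s^3.
Definition KL1f s := (14*s^3 - 75*s^4) * G s.
Definition KRf s := 7*s^2 - 25/2*s^3.
Definition KR1f s := (-14*s^3 + 75/2*s^4) * G s.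
Definition EFf s := 5*s^2.

Definition pieceO := mkSSPiece rO (fun l => G (sig l)) (fun l => R2f (sig l)) (fun l => R3f (sig l))
  (fun l => KLf (sig l)) (fun l => KL1f (sig l)) (fun l => KRf (sig l)) (fun l => KR1f (sig l))
  (fun l => EFf (sig l)).

Lemma pO_ok : piece_ok (fun x => Lf (3/2) < x) pieceO.
Proof.
  unfold piece_ok; simpl. repeat split.
  - intro n; apply rO_smooth.
  - intro n. apply CnOn_ext with (fun x => peval (PA (PM (PC (-7)) (PM PV PV)) (PM (PC 25) (PM PV (PM PV PV)))) (sig x)).
    intros x; simpl; unfold KLf; field. apply CnOn_pexpr; apply sig_smooth.
  - intro n. apply CnOn_ext with (fun x => peval (PA (PM (PC 7) (PM PV PV)) (PM (PC (-25/2)) (PM PV (PM PV PV)))) (sig x)).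
    intros x; simpl; unfold KRf; field. apply CnOn_pexpr; apply sig_smooth.
  - intro n. apply CnOn_ext with (fun x => peval (PM (PC 5) (PM PV PV)) (sig x)).
    intros x; simpl; unfold EFf; field. apply CnOn_pexpr; apply sig_smooth.
  - intros x Hx. apply rO_deriv'; exact Hx.
  - intros x Hx. apply comp_sig with (P' := fun s => -7 + 25*s); [|exact Hx|].
    intro s; unfold G; auto_derive; auto; field. unfold R2f, Phi; field.
  - intros x Hx. apply comp_sig with (P' := fun s => (14*s - 75*s^2) * G s + (7*s^2 - 25*s^3) * (-7 + 25*s)); [|exact Hx|].
    intro s; unfold R2f, G; auto_derive; auto; field. unfold R3f, Phi; field.
  - intros x Hx. apply comp_sig with (P' := fun s => -14*s + 75*s^2); [|exact Hx|].
    intro s; unfold KLf; auto_derive; auto; field. unfold KL1f, Phi; field.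
  - intros x Hx. apply comp_sig with (P' := fun s => 14*s - 75/2*s^2); [|exact Hx|].
    intro s; unfold KRf; auto_derive; auto; field. unfold KR1f, Phi; field.
Qed.


Lemma PI_neq : PI <> 0.
Proof. pose proof PI_RGT_0; lra. Qed.

Lemma pO_ev : forall l, Lf (3/2) < l ->
  Ef pieceO l = 5 / (r pieceO l)^2 /\ mu_matter pieceO l = 0 /\ Jrad pieceO l = 0.
Proof.
  intros l Hl. pose proof (rO_ge1 l Hl) as H1. pose proof PI_neq.
  pose proof PI_RGT_0.
  split; [|split]; unfold mu_matter, mu, Jrad; simpl; unfold EFf, R2f, KLf, KRf, KR1f, sig, G;
  generalize (rO l) H1; intros t Ht; field; lra.
Qed.

Definition pieceI := mkSSPiece (fun l => l) (fun _ => 1) (fun _ => 0) (fun _ => 0)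
  (fun _ => 0) (fun _ => 0) (fun _ => 0) (fun _ => 0) (fun _ => 0).

Lemma pI_ev : forall l, 0 < l -> mu_matter pieceI l = 0 /\ Jrad pieceI l = 0.
Proof.
  intros l Hl. pose proof PI_neq. split; unfold mu_matter, mu, Jrad; simpl; field; split; lra.
Qed.

Lemma rO2 : rO 2 = 2.
Proof. pattern 2 at 1. rewrite <- Lf2. apply rO_Lf. lra. Qed.

Lemma sig2 : sig 2 = 1/2.
Proof. unfold sig. rewrite rO2. field. Qed.

Lemma shell : dec_shell pieceI pieceO 2.
Proof.
  unfold dec_shell, shell_j, shell_sigma; simpl. rewrite sig2, rO2. pose proof PI_RGT_0.
  unfold G, KRf.
  replace (- (7 * (1 / 2) ^ 2 - 25 / 2 * (1 / 2) ^ 3 - 0) / (4 * PI)) with (- (3 / (64 * PI))) by (field; lra).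
  replace (- (1 - 7 * (1 / 2) + 25 / 2 * (1 / 2) ^ 2 - 1) / (4 * PI * 2)) with (3 / (64 * PI)) by (field; lra).
  rewrite Rabs_Ropp, Rabs_right. lra. left. apply Rdiv_lt_0_compat; lra.
Qed.

Lemma piece_I : piece_ok (fun x => - 3 < x < 3) pieceI.
Proof.
  unfold piece_ok; simpl. repeat split; try (intro n; apply CnOn_const); try (intro n; apply CnOn_id);
  intros x _; try apply derivable_pt_lim_const; apply derivable_pt_lim_id.
Qed.


Lemma thth_eq : forall l, Lf (3/2) < l -> thth pieceO l = 4*(rO l^2 - 14*rO l + 25)/rO l^4.
Proof.
  intros l Hl. pose proof (rO_ge1 l Hl) as H1. unfold thth, theta_plus, theta_minus; simpl.
  unfold KRf, sig, G. generalize (rO l) H1; intros t Ht. field. lra.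
Qed.

Lemma horizon : let rp := 7 + sqrt (7^2 - 5^2) in
  2 < Lf rp /\ horizon_at pieceO 2 (Lf rp) /\ r pieceO (Lf rp) = rp.
Proof.
  intro rp. set (q := sqrt (7^2 - 5^2)).
  assert (Hq2 : q * q = 24) by (unfold q; rewrite sqrt_sqrt; lra).
  assert (Hq : 0 < q) by (unfold q; apply sqrt_lt_R0; lra).
  assert (H7 : 7 < rp) by (unfold rp; fold q; lra).
  assert (HL7 : Lf 7 < Lf rp) by (apply Lf_mono; lra).
  assert (HL27 : 2 < Lf 7) by (pose proof (Lf_mono 2 7 ltac:(lra) ltac:(lra)); rewrite Lf2 in H; lra).
  assert (Hb : Lf (3/2) < 2) by apply Lf_b.
  assert (Hr : rO (Lf rp) = rp) by (apply rO_Lf; lra).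
  split; [lra|split; [|exact Hr]].
  split.
  - rewrite thth_eq by lra. rewrite Hr. unfold rp. fold q.
    replace ((7 + q) ^ 2 - 14 * (7 + q) + 25) with (q*q - 24) by ring. rewrite Hq2.
    unfold Rdiv; ring.
  - exists (Lf rp - Lf 7). split; [lra|split; [lra|]].
    intros l Hl. rewrite thth_eq by lra.
    assert (A : 7 < rO l) by (apply rO_gt; lra).
    assert (B : rO l < rp) by (apply rO_lt; try lra; pose proof (Lf_mono_le 1 (3/2)); lra).
    unfold rp in B; fold q in B.
    assert (C : rO l ^ 2 - 14 * rO l + 25 < 0) by nra.
    unfold Rdiv. apply Rmult_neg_pos. lra. apply Rinv_0_lt_compat. apply pow_lt. lra.
Qed.


Lemma bnd : forall N v j B, 1/2 <= v -> Rabs N <= B -> B * 2^j <= 1000 -> Rabs (N / v^j) <= 1000.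
Proof.
  intros N v j B Hv HN HB. unfold Rdiv. rewrite Rabs_mult, Rabs_inv, (Rabs_right (v^j)).
  2: { apply Rle_ge, pow_le; lra. }
  assert (0 < v^j) by (apply pow_lt; lra).
  assert (/ v^j <= 2^j).
  { replace (2^j) with (/ (/2)^j) by (rewrite pow_inv, Rinv_inv; reflexivity).
    apply Rinv_le_contravar. apply pow_lt; lra. apply pow_incr. lra. }
  pose proof (Rabs_pos N). assert (0 <= B) by lra.
  apply Rle_trans with (B * 2^j); [|lra]. apply Rmult_le_compat; try lra. left; apply Rinv_0_lt_compat; lra.
Qed.

Lemma fact_s : forall s k X N v j B, 0 < s -> X = s^k * (N / v^j) -> 1/2 <= v -> Rabs N <= B -> B * 2^j <= 1000 ->
  Rabs X <= 1000 * s^k.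
Proof.
  intros s k X N v j B Hs E Hv HN HB. rewrite E, Rabs_mult, (Rabs_right (s^k)).
  2: { apply Rle_ge, pow_le; lra. }
  rewrite Rmult_comm. apply Rmult_le_compat_r. apply pow_le; lra. eapply bnd; eauto.
Qed.

Lemma AF_t : forall t, 14 < t -> let s := / t in
  0 < G s /\ Rabs (1 / G s ^ 2 - 1) <= 1000 / t /\ Rabs (-2 * R2f s / G s ^4) <= 1000 / t^2 /\
  Rabs ((-2 * R3f s / G s^4 + 8 * R2f s^2 / G s^5)/ G s) <= 1000 / t^3 /\
  Rabs (KLf s / G s^2) <= 1000/t^2 /\
  Rabs ((KL1f s / G s^2 - 2 * KLf s * R2f s / G s^3) / G s) <= 1000 / t^3 /\
  Rabs (KRf s) <= 1000/t^2 /\ Rabs (KR1f s / G s) <= 1000/t^3.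
Proof.
  intros t Ht s.
  assert (Hs : 0 < s < 1/14).
  { unfold s. split. apply Rinv_0_lt_compat; lra.
    replace (1/14) with (/14) by field. apply Rinv_lt_contravar; lra. }
  assert (Et : t = / s) by (unfold s; rewrite Rinv_inv; reflexivity).
  assert (Hv : 1/2 <= G s <= 1) by (unfold G; split; nra).
  assert (Hv0 : G s <> 0) by lra.
  assert (E1 : 1000 / t = 1000 * s^1) by (rewrite Et; field; lra).
  assert (E2 : 1000 / t^2 = 1000 * s^2) by (rewrite Et; field; lra).
  assert (E3 : 1000 / t^3 = 1000 * s^3) by (rewrite Et; field; lra).
  rewrite E1, E2, E3.
  split; [lra|]. split; [|split; [|split; [|split; [|split; [|split]]]]].
  - apply (fact_s s 1 _ ((7 - 25/2*s)*(2 - 7*s + 25/2*s^2)) (G s) 2 14); try lra.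
    clear -Hv0. unfold G in *. field; repeat split; intro HH; apply Hv0; lra.
    apply Rabs_le; split; nra.
  - apply (fact_s s 2 _ (-2*(7 - 25*s)) (G s) 3 14); try lra.
    clear -Hv0. unfold R2f , G in *. field; repeat split; intro HH; apply Hv0; lra.
    apply Rabs_le; split; nra.
  - apply (fact_s s 3 _ (2*(14 - 75*s)*G s + 6*s*(7-25*s)^2) (G s) 4 50); try lra.
    clear -Hv0. unfold R2f, R3f , G in *. field; repeat split; intro HH; apply Hv0; lra.
    apply Rabs_le; split; nra.
  - apply (fact_s s 2 _ (-7 + 25*s) (G s) 2 7); try lra.
    clear -Hv0. unfold KLf , G in *. field; repeat split; intro HH; apply Hv0; lra.
    apply Rabs_le; split; nra.
  - apply (fact_s s 3 _ ((14 - 75*s)*G s + 2*s*(7-25*s)^2) (G s) 3 21); try lra.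
    clear -Hv0. unfold KL1f, KLf, R2f , G in *. field; repeat split; intro HH; apply Hv0; lra.
    apply Rabs_le; split; nra.
  - apply (fact_s s 2 _ (7 - 25/2*s) (G s) 0 7); try lra.
    unfold KRf. field.
    apply Rabs_le; split; nra.
  - apply (fact_s s 3 _ (-14 + 75/2*s) (G s) 0 14); try lra.
    clear -Hv0. unfold KR1f , G in *. field; repeat split; intro HH; apply Hv0; lra.
    apply Rabs_le; split; nra.
Qed.


Lemma adm_t : forall t, 14 < t -> Rabs (t / 2 * (1 / G (/t) ^2 - 1) - 7) <= 1000 * (/t)^1.
Proof.
  intros t Ht. set (s := /t).
  assert (Hs : 0 < s < 1/14).
  { unfold s. split. apply Rinv_0_lt_compat; lra.
    replace (1/14) with (/14) by field. apply Rinv_lt_contravar; lra. }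
  assert (Et : t = / s) by (unfold s; rewrite Rinv_inv; reflexivity).
  assert (Hv : 1/2 <= G s <= 1) by (unfold G; split; nra).
  assert (Hv0 : G s <> 0) by lra.
  apply (fact_s s 1 _ ((122 - 861*s + 9175/4*s^2 - 4375/2*s^3)/2) (G s) 2 100); try lra.
  rewrite Et. clear -Hv0 Hs. unfold G in *. field; repeat split; try lra; intro HH; apply Hv0; lra.
  apply Rabs_le; split; nra.
Qed.

Lemma adm : adm_mass pieceO 7.
Proof.
  intros eps Heps. exists (Lf (Rmax 14 (1000/eps))). intros l Hl.
  assert (H1 : 1 <= Rmax 14 (1000/eps)) by (pose proof (Rmax_l 14 (1000/eps)); lra).
  pose proof (rO_gt l _ H1 Hl) as H. pose proof (Rmax_l 14 (1000/eps)). pose proof (Rmax_r 14 (1000/eps)).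
  simpl. pose proof (adm_t (rO l) ltac:(lra)) as A.
  eapply Rle_lt_trans; [exact A|].
  assert (0 < rO l) by lra.
  rewrite pow_1. apply Rmult_lt_reg_r with (rO l); [lra|].
  rewrite Rmult_assoc, Rinv_l by lra.
  assert (1000 / eps < rO l) by lra.
  apply Rmult_lt_reg_r with (/eps). apply Rinv_0_lt_compat; lra.
  replace (eps * rO l * / eps) with (rO l) by (field; lra). lra.
Qed.

Lemma af : asymp_flat pieceO.
Proof.
  split.
  - intros N. exists (Lf (Rmax N 2)). intros l Hl.
    assert (H1 : 1 <= Rmax N 2) by (pose proof (Rmax_r N 2); lra).
    pose proof (rO_gt l _ H1 Hl). pose proof (Rmax_l N 2). simpl. lra.
  - exists (Lf 14), 1000. intros l Hl.
    pose proof (rO_gt l 14 ltac:(lra) Hl) as H.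
    exact (AF_t _ H).
Qed.

Theorem theorem1 :
  exists (pI pO : SSPiece) (a b ls lB Q M : R),
    0 < b /\ b < ls /\ ls < a /\ ls <= lB /\
    (* regularity (up to the shell) *)
    piece_ok (fun x => - a < x < a) pI /\
    piece_ok (fun x => b < x) pO /\
    center_regular a pI /\
    (forall l, 0 < l <= ls -> 0 < r pI l) /\
    (forall l, ls <= l -> 0 < r pO l) /\
    r pO ls = r pI ls /\
    (* dominant energy condition, in the bulk and on the shell *)
    (forall l, 0 < l < ls -> dec_bulk pI l) /\
    (forall l, ls < l -> dec_bulk pO l) /\
    dec_shell pI pO ls /\
    (* electrovacuum outside B, with charge Q *)
    (forall l, lB < l ->
       Ef pO l = Q / (r pO l)^2 /\ mu_matter pO l = 0 /\ Jrad pO l = 0) /\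
    (* asymptotically flat, with mass M > |Q| *)
    asymp_flat pO /\ adm_mass pO M /\ Rabs Q < M /\
    (* not time-symmetric *)
    ((exists l, 0 < l < ls /\ (Kl pI l <> 0 \/ Kr pI l <> 0)) \/
     (exists l, ls < l /\ (Kl pO l <> 0 \/ Kr pO l <> 0))) /\
    (* not maximal *)
    ((exists l, 0 < l < ls /\ Kl pI l + 2 * Kr pI l <> 0) \/
     (exists l, ls < l /\ Kl pO l + 2 * Kr pO l <> 0)) /\
    (* a horizon outside B, of area radius r_+ *)
    (exists lh, lB < lh /\ horizon_at pO ls lh /\
       r pO lh = M + sqrt (M^2 - Q^2)) /\
    (* the area radius R of B satisfies 2R < |Q| *)
    2 * r pO lB < Rabs Q.
Proof.
  pose proof Lf_b as [Hb1 Hb2].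
  assert (Habs : Rabs 5 = 5) by (apply Rabs_right; lra).
  assert (Hs3 : sig 3 <> 0) by (unfold sig; pose proof (rO_ge1 3 ltac:(lra)); apply Rinv_neq_0_compat; lra).
  assert (HKK : Kl pieceO 3 + 2 * Kr pieceO 3 <> 0).
  { simpl. unfold KLf, KRf. replace (-7 * sig 3 ^ 2 + 25 * sig 3 ^ 3 + 2 * (7 * sig 3 ^ 2 - 25 / 2 * sig 3 ^ 3))
      with (7 * (sig 3 * sig 3)) by field.
    apply Rmult_integral_contrapositive_currified; [lra|]. apply Rmult_integral_contrapositive_currified; auto. }
  exists pieceI, pieceO, 3, (Lf (3/2)), 2, 2, 5, 7.
  split; [lra|]. split; [lra|]. split; [lra|]. split; [lra|].
  split; [exact piece_I|]. split; [exact pO_ok|].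
  split. { unfold center_regular; simpl. repeat split; intros; ring. }
  split. { intros l Hl; simpl; lra. }
  split. { intros l Hl; simpl. pose proof (rO_ge1 l ltac:(lra)); lra. }
  split. { simpl; exact rO2. }
  split. { intros l Hl. destruct (pI_ev l ltac:(lra)) as [A B]. unfold dec_bulk. rewrite A, B, Rabs_R0; lra. }
  split. { intros l Hl. destruct (pO_ev l ltac:(lra)) as [_ [A B]]. unfold dec_bulk. rewrite A, B, Rabs_R0; lra. }
  split; [exact shell|].
  split. { intros l Hl. apply pO_ev. lra. }
  split; [exact af|]. split; [exact adm|]. split; [rewrite Habs; lra|].
  split. { right. exists 3. split; [lra|].
    destruct (Req_dec (Kl pieceO 3) 0) as [E|E]; [right|left; exact E].
    intro E2. apply HKK. rewrite E, E2; ring. }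
  split. { right. exists 3. split; [lra|exact HKK]. }
  split. { destruct horizon as [A [B C]]. exists (Lf (7 + sqrt (7^2 - 5^2))). split; [exact A|]. split; [exact B|exact C]. }
  simpl. rewrite rO2, Habs. lra.
Qed.
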